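(* Let $\mathrm{R}$ be a real closed field, $\mathrm{C}=\mathrm{R}[i]$, let $F/G\in\mathrm{C}(Z)\setminus\{0\}$, $\gamma\in\mathrm{C}\setminus\{0\}$ and let $\Gamma=[x_0,x_1]\times[y_0,y_1]\subset\mathrm{R}^2$ with $x_0<x_1$, $y_0<y_1$, such that $\mathrm{val}_z(F/G)$ is even for every vertex $z$ of $\Gamma$. Then $\mathrm{w}(F/G\mid\partial\Gamma)=\mathrm{w}(\gamma F/G\mid\partial\Gamma)$.
   Context: Points $(x,y)\in\mathrm{R}^2$ are identified with $x+iy\in\mathrm{C}$. For nonzero $P\in\mathrm{R}[X]$ and $x\in\mathrm{R}$ write uniquely $P=(X-x)^{\mathrm{mult}_x(P)}P_x$ with $P_x(x)\neq0$; for $P,Q\neq0$ set $\mathrm{val}_x(P/Q)=\mathrm{mult}_x(P)-\mathrm{mult}_x(Q)$. For $P,Q\in\mathrm{R}[X]$, $x\in\mathrm{R}$: $\mathrm{Ind}^+_x(P,Q)=\tfrac12\,\mathrm{sign}(P_x(x)Q_x(x))$ and $\mathrm{Ind}^-_x(P,Q)=\tfrac12(-1)^{\mathrm{val}_x(P/Q)}\mathrm{sign}(P_x(x)Q_x(x))$ if $P\ne0$, $Q\neq0$ and $\mathrm{val}_x(P/Q)<0$, and both are $0$ otherwise; $\mathrm{Ind}_x=\mathrm{Ind}^+_x-\mathrm{Ind}^-_x$. For $a<b$, $\mathrm{Ind}_a^b(P,Q)=\mathrm{Ind}_a^+(P,Q)+\sum_{x\in(a,b)}\mathrm{Ind}_x(P,Q)-\mathrm{Ind}_b^-(P,Q)$;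 $\mathrm{Ind}_a^b=-\mathrm{Ind}_b^a$ if $b<a$, and $\mathrm{Ind}_a^a=0$. For $F\in\mathrm{C}[X,Y]$ let $F_{\rm re},F_{\rm im}\in\mathrm{R}[X,Y]$ with $F=F_{\rm re}+iF_{\rm im}$, and $\overline F=F_{\rm re}-iF_{\rm im}$. Define $\mathrm{w}(F\mid\partial\Gamma)=\tfrac12\big(\mathrm{Ind}_{x_0}^{x_1}(F_{\rm re}(T,y_0),F_{\rm im}(T,y_0))+\mathrm{Ind}_{y_0}^{y_1}(F_{\rm re}(x_1,T),F_{\rm im}(x_1,T))+\mathrm{Ind}_{x_1}^{x_0}(F_{\rm re}(T,y_1),F_{\rm im}(T,y_1))+\mathrm{Ind}_{y_1}^{y_0}(F_{\rm re}(x_0,T),F_{\rm im}(x_0,T))\big)$. $\mathrm{C}[Z]\subset\mathrm{C}[X,Y]$ via $Z=X+iY$. For $F,G\in\mathrm{C}[X,Y]$, $G\neq0$, $\mathrm{w}(F/G\mid\partial\Gamma):=\mathrm{w}(F\overline G\mid\partial\Gamma)$ (independent of the representation). For nonzero $F\in\mathrm{C}[Z]$, $z\in\mathrm{C}$ write $F=(Z-z)^{\mathrm{mult}_z(F)}F_z$ with $F_z(z)\ne0$, and $\mathrm{val}_z(F/G)=\mathrm{mult}_z(F)-\mathrm{mult}_z(G)$ for $F,G\ne0$. *)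

(* Defs.v *)
From HB Require Import structures.
From mathcomp Require Import all_boot all_order all_algebra.
From mathcomp Require Import polyrcf complex.
Set Implicit Arguments. Unset Strict Implicit. Unset Printing Implicit Defensive.
Import Order.TTheory GRing.Theory Num.Theory.
Local Open Scope ring_scope.

Section Index.
Variable R : rcfType.
Implicit Types (P Q : {poly R}) (x a b : R).

Definition mult x P : nat := mup x P.
Definition pcofactor x P : {poly R} := P %/ ('X - x%:P) ^+ mult x P.
Definition valR x P Q : int := (mult x P)%:Z - (mult x Q)%:Z.

Definition sgprod x P Q : R :=
  Num.sg ((pcofactor x P).[x] * (pcofactor x Q).[x]).

Definition IndP x P Q : R :=
  if [&& P != 0, Q != 0 & valR x P Q < 0] then 2^-1 * sgprod x P Q else 0.
Definition IndM x P Q : R :=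
  if [&& P != 0, Q != 0 & valR x P Q < 0]
  then 2^-1 * ((-1) ^ valR x P Q * sgprod x P Q) else 0.
Definition Ind x P Q : R := IndP x P Q - IndM x P Q.

(* The sum over x in (a,b) is finitely supported:
   Ind_x(P,Q) <> 0 forces Q(x) = 0; we sum over the (ordered, duplicate-free)
   list of roots of Q in ]a,b[ (polyrcf.roots; empty when Q = 0). *)
Definition IndAB_lt a b P Q : R :=
  IndP a P Q + \sum_(x <- roots Q a b) Ind x P Q - IndM b P Q.

Definition IndAB a b P Q : R :=
  if a < b then IndAB_lt a b P Q
  else if b < a then - IndAB_lt b a P Q else 0.
End Index.

(* C[X,Y] is represented as {poly {poly C}}: the outer variable is Y, the
   inner (coefficient) variable is X. *)
Section Winding.
Variable R : rcfType.
Local Notation C := (R[i]).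

Definition bipoly := {poly {poly C}}.

Definition bre (F : bipoly) : {poly {poly R}} := map_poly (map_poly (@complex.Re R)) F.
Definition bim (F : bipoly) : {poly {poly R}} := map_poly (map_poly (@complex.Im R)) F.
Definition bconj (F : bipoly) : bipoly := map_poly (map_poly conjc) F.

Definition evalY (P : {poly {poly R}}) (y : R) : {poly R} := P.[y%:P].
Definition evalX (P : {poly {poly R}}) (x : R) : {poly R} := map_poly (fun p => p.[x]) P.

(* embedding C[Z] -> C[X,Y], Z = X + iY *)
Definition Zpoly : bipoly := ('X : {poly C})%:P + ('i : C)%:P%:P * 'X.
Definition ofZ (F : {poly C}) : bipoly :=
  (map_poly (fun c : C => c%:P%:P) F : {poly bipoly}).[Zpoly].

Definition wind (F : bipoly) (x0 x1 y0 y1 : R) : R :=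
  2^-1 * (IndAB x0 x1 (evalY (bre F) y0) (evalY (bim F) y0)
        + IndAB y0 y1 (evalX (bre F) x1) (evalX (bim F) x1)
        + IndAB x1 x0 (evalY (bre F) y1) (evalY (bim F) y1)
        + IndAB y1 y0 (evalX (bre F) x0) (evalX (bim F) x0)).

Definition windQ (F G : bipoly) x0 x1 y0 y1 : R := wind (F * bconj G) x0 x1 y0 y1.

Definition valC (z : C) (F G : {poly C}) : int := (mup z F)%:Z - (mup z G)%:Z.
End Winding.

(* Main.v *)
Require Import Defs.
From HB Require Import structures.
From mathcomp Require Import all_boot all_order all_algebra.
From mathcomp Require Import polyrcf complex.
From mathcomp Require Import ring lra.
Import Order.TTheory GRing.Theory Num.Theory.
Local Open Scope ring_scope.

Module Helpers.
Set Implicit Arguments. Unset Strict Implicit. Unset Printing Implicit Defensive.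
Local Open Scope complex_scope.
Local Open Scope ring_scope.

Section Mup.
Variable K : fieldType.
Implicit Types (x c : K) (p q : {poly K}).

Lemma mup_fact x m p : ~~ root p x -> mup x (('X - x%:P)^+m * p) = m.
Proof. by move=> h; rewrite mupMl // mup_XsubCX eqxx. Qed.

Lemma mup_factor x p : p != 0 ->
  exists2 q, p = ('X - x%:P)^+(mup x p) * q & ~~ root q x.
Proof.
move=> p0; have : ('X - x%:P)^+(mup x p) %| p by rewrite -mup_geq.
case/dvdpP => q hq; exists q; first by rewrite mulrC.
apply/negP => rq.
have : ('X - x%:P)^+(mup x p).+1 %| p.
  by rewrite [X in _ %| X]hq exprS; apply: dvdp_mul; rewrite ?dvdp_XsubCl ?dvdpp.
by rewrite -mup_geq // ltnn.
Qed.

Lemma mupCM x c p : c != 0 -> mup x (c%:P * p) = mup x p.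
Proof. by move=> c0; rewrite mupMr // rootC. Qed.

Lemma mup_ge x k A p : p != 0 -> p = ('X - x%:P)^+k * A -> (k <= mup x p)%N.
Proof. by move=> p0 hp; rewrite mup_geq // hp dvdp_mulr. Qed.

Lemma mup_shift x k A : A != 0 ->
  mup x (('X - x%:P)^+k * A) = (k + mup x A)%N.
Proof.
by move=> A0; rewrite mupM ?expf_neq0 ?polyXsubC_eq0 // mup_XsubCX eqxx.
Qed.

Lemma mup_pos x A : A != 0 -> root A x -> (0 < mup x A)%N.
Proof. by move=> A0 r; rewrite -XsubC_dvd // dvdp_XsubCl. Qed.

End Mup.

Section Real.
Variable R : rcfType.
Implicit Types (P Q A B : {poly R}) (x a b u v : R).
Local Notation T x := ('X - x%:P).

Lemma mult_fact x m A : ~~ root A x -> mult x (T x ^+ m * A) = m.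
Proof. exact: mup_fact. Qed.

Lemma pcof_fact x m A : ~~ root A x -> pcofactor x (T x ^+ m * A) = A.
Proof.
move=> h; rewrite /pcofactor mult_fact // mulKp // expf_neq0 //.
by rewrite polyXsubC_eq0.
Qed.

Lemma nopole x P Q : (Q = 0 \/ exists A, P = T x ^+ (mult x Q) * A) ->
  IndP x P Q = 0 /\ IndM x P Q = 0.
Proof.
rewrite /IndP /IndM.
case: (boolP [&& P != 0, Q != 0 & valR x P Q < 0]) => //.
case/and3P => P0 Q0 v0 [Qe|[A hA]]; first by rewrite Qe eqxx in Q0.
have := mup_ge P0 hA; rewrite /valR /mult in v0 *.
by move=> h; move: v0; rewrite subr_lt0 ltz_nat ltnNge h.
Qed.

Lemma pole x P Q k m Ph Qh : ~~ root Ph x -> ~~ root Qh x -> (k < m)%N ->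
  P = T x ^+ k * Ph -> Q = T x ^+ m * Qh ->
  IndP x P Q = 2^-1 * Num.sg (Ph.[x] * Qh.[x]) /\
  IndM x P Q = 2^-1 * ((-1) ^+ (k + m) * Num.sg (Ph.[x] * Qh.[x])).
Proof.
move=> rP rQ km hP hQ.
have P0 : P != 0 by rewrite hP mulf_neq0 ?expf_neq0 ?polyXsubC_eq0 //; apply: contraNneq rP => ->; rewrite root0.
have Q0 : Q != 0 by rewrite hQ mulf_neq0 ?expf_neq0 ?polyXsubC_eq0 //; apply: contraNneq rQ => ->; rewrite root0.
have v : valR x P Q = k%:Z - m%:Z by rewrite /valR hP hQ !mult_fact.
have vl : valR x P Q < 0 by rewrite v subr_lt0 ltz_nat.
rewrite /IndP /IndM P0 Q0 vl /sgprod hP hQ !pcof_fact //=; split => //.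
rewrite -hP -hQ v expN1r distnEr ?(ltnW km) //.
rewrite -signr_odd oddB ?(ltnW km) // -[in RHS]signr_odd oddD.
by rewrite addbC.
Qed.

End Real.


Section Local.
Variable R : rcfType.
Local Notation T x := ('X - x%:P).
Variables (al be : R).
Hypothesis be0 : be != 0.
Variables (P Q P' Q' : {poly R}).
Hypothesis hP' : P' = al%:P * P - be%:P * Q.
Hypothesis hQ' : Q' = be%:P * P + al%:P * Q.

Definition qv x (S : {poly R}) := (pcofactor x S).[x].
Definition Rf x := 2^-1 * Num.sg (be * qv x Q * qv x Q').
Definition Lf x := 2^-1 * ((-1) ^+ absz ((mult x Q)%:Z - (mult x Q')%:Z)
                           * Num.sg (be * qv x Q * qv x Q')).
Definition Sf x := if [&& Q != 0, Q' != 0 & mult x Q == mult x Q']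
                   then 2^-1 * Num.sg (be * qv x Q * qv x Q') else 0.

Lemma PE : P = be^-1%:P * (Q' - al%:P * Q).
Proof. by rewrite hQ' addrK mulrA -polyCM mulVf // mul1r. Qed.

Lemma P'E : P' = be^-1%:P * (al%:P * Q' - (al%:P ^+ 2 + be%:P ^+ 2) * Q).
Proof.
have -> : al%:P * Q' - (al%:P ^+ 2 + be%:P ^+ 2) * Q = be%:P * P'.
  by rewrite hQ' hP'; ring.
by rewrite mulrA -polyCM mulVf // mul1r.
Qed.


Lemma PQfact x k Qa Qb : Q = T x ^+ k * Qa -> Q' = T x ^+ k * Qb ->
  P = T x ^+ k * (be^-1%:P * (Qb - al%:P * Qa)) /\
  P' = T x ^+ k * (be^-1%:P * (al%:P * Qb - (al%:P ^+ 2 + be%:P ^+ 2) * Qa)).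
Proof.
move=> hQ hQ2; split; first by rewrite PE hQ hQ2; ring.
by rewrite P'E hQ hQ2; ring.
Qed.
Lemma s0 : 0 < al ^+ 2 + be ^+ 2.
Proof. by rewrite ltr_pwDr ?sqr_ge0 // exprn_even_gt0 //=. Qed.

Lemma sgnorm a : Num.sg ((be^-1 * (al ^+ 2 + be ^+ 2)) * a) = Num.sg (be * a).
Proof.
have s0 : 0 < al ^+ 2 + be ^+ 2.
  by rewrite ltr_pwDr ?sqr_ge0 // exprn_even_gt0 //=.
by rewrite !sgrM sgrV (gtr0_sg s0) mulr1.
Qed.

Lemma sign_dist (m n : nat) : (-1) ^+ (m + n) = (-1) ^+ absz (m%:Z - n%:Z) :> R.
Proof.
rewrite -signr_odd oddD -[RHS]signr_odd.
case: (leqP m n) => h; first by rewrite distnEr // oddB // addbC.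
by rewrite distnEl ?(ltnW h) // oddB // ltnW.
Qed.

Lemma local x : Q != 0 -> Q' != 0 ->
  IndP x P Q - IndP x P' Q' = Rf x - Sf x /\
  IndM x P Q - IndM x P' Q' = Lf x - Sf x.
Proof.
move=> Q0 Q'0.
have [Qh hQ rQ] := mup_factor x Q0.
have [Qh' hQ2 rQ'] := mup_factor x Q'0.
have hm : mult x Q = mup x Q by [].
have hm' : mult x Q' = mup x Q' by [].
move: hm hm' hQ hQ2; move: (mup x Q) (mup x Q') => m m' hm hm' hQ hQ2.
have qQ : qv x Q = Qh.[x] by rewrite /qv hQ pcof_fact.
have qQ' : qv x Q' = Qh'.[x] by rewrite /qv hQ2 pcof_fact.
rewrite /Rf /Lf /Sf Q0 Q'0 /= qQ qQ' hm hm'.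
have hT j : (T x ^+ j).[x] = (j == 0)%:R.
  by rewrite horner_exp hornerXsubC subrr expr0n.
have nr c A : c != 0 -> A.[x] = c -> ~~ root A x.
  by move=> c0 hA; rewrite /root hA.
have qh0 : Qh.[x] != 0 by rewrite -rootE.
have qh0' : Qh'.[x] != 0 by rewrite -rootE.
case: (ltngtP m m') => hmm.
- have hQ2' : Q' = T x ^+ m * (T x ^+ (m' - m) * Qh').
    by rewrite mulrA -exprD subnKC // ltnW.
  have [hP hP2] := PQfact hQ hQ2'.
  have [n1 n2] : IndP x P Q = 0 /\ IndM x P Q = 0.
    by apply: nopole; right; rewrite hm; eexists; exact: hP.
  have rB : (be^-1%:P * (al%:P * (T x ^+ (m' - m) * Qh') - (al%:P ^+ 2 + be%:P ^+ 2) * Qh)).[x]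
       = - (be^-1 * (al ^+ 2 + be ^+ 2)) * Qh.[x].
    by rewrite !hornerE subrr expr0n eqn0Ngt subn_gt0 hmm /=; ring.
  have c0 : - (be^-1 * (al ^+ 2 + be ^+ 2)) * Qh.[x] != 0.
    by rewrite mulNr oppr_eq0 !mulf_neq0 ?invr_eq0 // gt_eqF // s0.
  have [p1 p2] := pole (nr _ _ c0 rB) rQ' hmm hP2 hQ2.
  rewrite p1 p2 n1 n2 rB -sign_dist.
  rewrite !sgrM !sgrN !sgrM sgrV (gtr0_sg s0).
  split; ring.
- have hQ3 : Q = T x ^+ m' * (T x ^+ (m - m') * Qh).
    by rewrite hQ mulrA -exprD subnKC // ltnW.
  have [hP hP2] := PQfact hQ3 hQ2.
  have [n1 n2] : IndP x P' Q' = 0 /\ IndM x P' Q' = 0.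
    by apply: nopole; right; rewrite hm'; eexists; exact: hP2.
  have rA : (be^-1%:P * (Qh' - al%:P * (T x ^+ (m - m') * Qh))).[x]
       = be^-1 * Qh'.[x].
    by rewrite !hornerE subrr expr0n eqn0Ngt subn_gt0 hmm /=; ring.
  have c0 : be^-1 * Qh'.[x] != 0 by rewrite mulf_neq0 ?invr_eq0.
  have [p1 p2] := pole (nr _ _ c0 rA) rQ hmm hP hQ.
  rewrite p1 p2 n1 n2 rA -sign_dist addnC.
  rewrite !sgrM sgrV.
  split; ring.
- move: hQ2 hm'; rewrite -hmm => hQ2 hm'.
  have [hP hP2] := PQfact hQ hQ2.
  have [n1 n2] : IndP x P Q = 0 /\ IndM x P Q = 0.
    by apply: nopole; right; rewrite hm; eexists; exact: hP.
  have [n3 n4] : IndP x P' Q' = 0 /\ IndM x P' Q' = 0.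
    by apply: nopole; right; rewrite hm'; eexists; exact: hP2.
  rewrite n1 n2 n3 n4 !subrr /= expr0 mul1r.
  by rewrite !subrr.
Qed.

Lemma IndAB0 (a b : R) (P1 Q1 : {poly R}) : (forall x, IndP x P1 Q1 = 0 /\ IndM x P1 Q1 = 0) ->
  IndAB_lt a b P1 Q1 = 0.
Proof.
move=> h; rewrite /IndAB_lt big1 => [|x _]; last first.
  by rewrite /Ind; have [-> ->] := h x; rewrite subrr.
by have [-> _] := h a; have [_ ->] := h b; rewrite add0r subr0.
Qed.

Lemma degen (a b : R) : (Q == 0) || (Q' == 0) ->
  IndAB_lt a b P Q = 0 /\ IndAB_lt a b P' Q' = 0.
Proof.
case/orP => /eqP h.
- split; first by apply: IndAB0 => x; apply: nopole; left.
  apply: IndAB0 => x; apply: nopole.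
  have [P0|P0] := eqVneq P 0.
    by left; rewrite hQ' P0 h !mulr0 addr0.
  right; have [Ph hP _] := mup_factor x P0.
  exists (al%:P * Ph); rewrite hP' h mulr0 subr0 hQ' h mulr0 addr0.
  by rewrite /mult mupCM // {1}hP mulrCA.
- split; last by apply: IndAB0 => x; apply: nopole; left.
  apply: IndAB0 => x; apply: nopole.
  have [Q0|Q0] := eqVneq Q 0; first by left.
  right; have [Qh hQ _] := mup_factor x Q0.
  have hQ2 : Q' = T x ^+ mup x Q * 0 by rewrite h mulr0.
  have [hP _] := PQfact hQ hQ2.
  by eexists; exact: hP.
Qed.

Lemma Sf_degen x : (Q == 0) || (Q' == 0) -> Sf x = 0.
Proof. by rewrite /Sf; case/orP => /eqP ->; rewrite eqxx //= andbF. Qed.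

End Local.


Section Tele.
Variable R : rcfType.
Local Notation T x := ('X - x%:P).
Implicit Types (P Q : {poly R}) (u v x : R).

Lemma sign_tele Q u v : Q != 0 -> u < v -> {in `]u, v[, forall t, ~~ root Q t} ->
  Num.sg (qv u Q) = (-1) ^+ mult v Q * Num.sg (qv v Q).
Proof.
move=> Q0 uv nr.
have [Qu hu ru] := mup_factor u Q0.
have [Qv hv rv] := mup_factor v Q0.
have -> : qv u Q = Qu.[u] by rewrite /qv {1}hu pcof_fact.
have -> : qv v Q = Qv.[v] by rewrite /qv {1}hv pcof_fact.
have -> : mult v Q = mup v Q by [].
set w := (u + v) / 2.
have [uw wv] := midf_lt uv; rewrite -/w in uw wv.
have nQ t : u < t -> t < v -> Q.[t] != 0.
  by move=> h1 h2; have := nr t; rewrite in_itv /= h1 h2 => /(_ isT).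
have n1 : {in `[u, w], forall t, ~~ root Qu t}.
  move=> t; rewrite in_itv /= => /andP[h1 h2].
  case: (eqVneq t u) => [->|tu]; first exact: ru.
  have h3 : u < t by rewrite lt_neqAle eq_sym tu.
  have := nQ t h3 (le_lt_trans h2 wv).
  by rewrite /root {1}hu hornerM; apply: contra => /eqP ->; rewrite mulr0.
have n2 : {in `[w, v], forall t, ~~ root Qv t}.
  move=> t; rewrite in_itv /= => /andP[h1 h2].
  case: (eqVneq t v) => [->|tv]; first exact: rv.
  have h3 : t < v by rewrite lt_neqAle tv.
  have := nQ t (lt_le_trans uw h1) h3.
  by rewrite /root {1}hv hornerM; apply: contra => /eqP ->; rewrite mulr0.
have e1 : Num.sg Qu.[u] = Num.sg Qu.[w].
  by apply: (polyrN0_itv n1); rewrite in_itv /= ?lexx ltW.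
have e2 : Num.sg Qv.[w] = Num.sg Qv.[v].
  by apply: (polyrN0_itv n2); rewrite in_itv /= ?lexx ltW.
have e3 : Num.sg Q.[w] = Num.sg Qu.[w].
  rewrite {1}hu hornerM sgrM horner_exp hornerXsubC sgrX gtr0_sg ?expr1n ?mul1r //.
  by rewrite subr_gt0.
have e4 : Num.sg Q.[w] = (-1) ^+ mup v Q * Num.sg Qv.[w].
  rewrite {1}hv hornerM sgrM horner_exp hornerXsubC sgrX ltr0_sg //.
  by rewrite subr_lt0.
by rewrite e1 -e3 e4 e2.
Qed.

End Tele.

Section Edge.
Variable R : rcfType.
Local Notation T x := ('X - x%:P).

Lemma Ind_nonroot x (P Q : {poly R}) : ~~ root Q x -> Ind x P Q = 0.
Proof.
move=> rQ; rewrite /Ind.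
have [Q0|Q0] := eqVneq Q 0; first by rewrite Q0 root0 in rQ.
have h : P = T x ^+ mult x Q * P by rewrite /mult mupNroot // expr0 mul1r.
by have [-> ->] := @nopole R x P Q (or_intror (ex_intro _ P h)); rewrite subrr.
Qed.

Lemma sum_roots a b (P Q Q2 : {poly R}) : Q * Q2 != 0 ->
  \sum_(x <- roots Q a b) Ind x P Q = \sum_(x <- roots (Q * Q2) a b) Ind x P Q.
Proof.
move=> h.
have Q0 : Q != 0 by apply: contraNneq h => ->; rewrite mul0r.
rewrite [RHS](bigID (fun x => root Q x)) /= [X in _ = _ + X]big1 ?addr0; last first.
  by move=> x /Ind_nonroot.
rewrite -[RHS]big_filter; apply: perm_big; apply: uniq_perm.
- exact: uniq_roots.
- exact/filter_uniq/uniq_roots.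
move=> x; rewrite mem_filter !in_roots rootM h Q0 !andbT.
by case: (root Q x).
Qed.

Variables (al be : R).
Hypothesis be0 : be != 0.
Variables (P Q P' Q' : {poly R}).
Hypothesis hP' : P' = al%:P * P - be%:P * Q.
Hypothesis hQ' : Q' = be%:P * P + al%:P * Q.
Hypothesis Q0 : Q != 0.
Hypothesis Q'0 : Q' != 0.

Local Notation RF := (Rf be Q Q').
Local Notation LF := (Lf be Q Q').
Local Notation SF := (Sf be Q Q').

Lemma Rf_Lf u v : u < v -> {in `]u, v[, forall t, ~~ root (Q * Q') t} ->
  RF u = LF v.
Proof.
move=> uv h.
have h1 : {in `]u, v[, forall t, ~~ root Q t}.
  by move=> t /h; rewrite rootM negb_or => /andP[].
have h2 : {in `]u, v[, forall t, ~~ root Q' t}.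
  by move=> t /h; rewrite rootM negb_or => /andP[].
rewrite /Rf /Lf -mulrA (sgrM be) -mulrA (sgrM (qv u Q)).
rewrite (sign_tele Q0 uv h1) (sign_tele Q'0 uv h2) -sign_dist exprD.
rewrite -mulrA (sgrM be) -mulrA (sgrM (qv v Q)).
ring.
Qed.

Lemma tele v : forall s u, u < v -> path <%R u s -> (forall y, y \in s -> y < v) ->
  (forall y, u < y -> y < v -> root (Q * Q') y -> y \in s) ->
  RF u + \sum_(y <- s) (RF y - LF y) - LF v = 0.
Proof.
elim=> [|z s IH] u uv ps hs hr.
  rewrite big_nil addr0 (Rf_Lf uv) ?subrr // => t; rewrite in_itv /= => /andP[h1 h2].
  by apply/negP => /(hr t h1 h2).
move: ps => /= /andP[uz pz].
have zv : z < v by apply: hs; rewrite mem_head.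
rewrite big_cons.
have e1 : RF u = LF z.
  apply: Rf_Lf => // t; rewrite in_itv /= => /andP[h1 h2].
  apply/negP => /(hr t h1 (lt_trans h2 zv)); rewrite in_cons => /orP[/eqP e|ts].
    by rewrite e ltxx in h2.
  have := order_path_min lt_trans pz => /allP /(_ t ts).
  by rewrite ltNge (ltW h2).
have e2 := IH z zv pz (fun y ys => hs y (ltac:(by rewrite in_cons ys orbT))).
rewrite -[RHS](e2 _); first by rewrite e1; ring.
move=> y h1 h2 ry; have := hr y (lt_trans uz h1) h2 ry.
by rewrite in_cons => /orP[/eqP e|//]; rewrite e ltxx in h1.
Qed.

Lemma edge_main a b : a < b ->
  IndAB_lt a b P Q - IndAB_lt a b P' Q' = SF b - SF a.
Proof.
move=> ab.
have QQ : Q * Q' != 0 by rewrite mulf_neq0.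
rewrite /IndAB_lt (sum_roots a b P QQ).
rewrite (@sum_roots a b P' Q' Q) ?mulf_neq0 // [Q' * Q]mulrC.
have hs : \sum_(x <- roots (Q * Q') a b) Ind x P Q -
          \sum_(x <- roots (Q * Q') a b) Ind x P' Q' =
          \sum_(x <- roots (Q * Q') a b) (RF x - LF x).
  rewrite -sumrB; apply: eq_bigr => x _; rewrite /Ind.
  have [h1 h2] := local be0 hP' hQ' x Q0 Q'0.
  lra.
have hy1 : forall y, y \in roots (Q * Q') a b -> y < b.
  by move=> y /roots_in; rewrite in_itv /= => /andP[].
have hy2 : forall y, a < y -> y < b -> root (Q * Q') y -> y \in roots (Q * Q') a b.
  by move=> y h1 h2 ry; apply: root_in_roots => //; rewrite in_itv /= h1 h2.
have ht := @tele b (roots (Q * Q') a b) a ab (path_roots _ _ _) hy1 hy2.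
have [h1 _] := local be0 hP' hQ' a Q0 Q'0.
have [_ h2] := local be0 hP' hQ' b Q0 Q'0.
lra.
Qed.

End Edge.

Lemma edge (R : rcfType) (al be : R) (P Q P' Q' : {poly R}) a b :
  be != 0 -> P' = al%:P * P - be%:P * Q -> Q' = be%:P * P + al%:P * Q -> a < b ->
  IndAB_lt a b P Q - IndAB_lt a b P' Q' = Sf be Q Q' b - Sf be Q Q' a.
Proof.
move=> be0 hP' hQ' ab.
case: (boolP ((Q == 0) || (Q' == 0))) => h.
  have [-> ->] := degen be0 hP' hQ' a b h.
  by rewrite !Sf_degen // subrr.
move: h; rewrite negb_or => /andP[Q0 Q'0].
exact: (edge_main be0 hP' hQ' Q0 Q'0 ab).
Qed.


Section Cx.
Variable R : rcfType.
Local Notation C := R[i].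
Local Notation T x := ('X - x%:P).
Local Notation Re := (@complex.Re R).
Local Notation Im := (@complex.Im R).

Lemma ReM (a b : C) : Re (a * b) = Re a * Re b - Im a * Im b.
Proof. by case: a => a1 a2; case: b => b1 b2. Qed.
Lemma ImM (a b : C) : Im (a * b) = Re a * Im b + Im a * Re b.
Proof. by case: a => a1 a2; case: b => b1 b2. Qed.
Lemma ReD (a b : C) : Re (a + b) = Re a + Re b.
Proof. by case: a => a1 a2; case: b => b1 b2. Qed.
Lemma ImD (a b : C) : Im (a + b) = Im a + Im b.
Proof. by case: a => a1 a2; case: b => b1 b2. Qed.
Lemma Re_real (r : R) : Re r%:C = r. Proof. by []. Qed.
Lemma Im_real (r : R) : Im r%:C = 0. Proof. by []. Qed.

Definition reP (h : {poly C}) : {poly R} := map_poly Re h.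
Definition imP (h : {poly C}) : {poly R} := map_poly Im h.

Lemma reP_scale (g : C) h : reP (g%:P * h) = (Re g)%:P * reP h - (Im g)%:P * imP h.
Proof.
apply/polyP => i; rewrite coef_map_id0 // coefB !coefCM !coef_map_id0 //.
by rewrite ReM.
Qed.

Lemma imP_scale (g : C) h : imP (g%:P * h) = (Im g)%:P * reP h + (Re g)%:P * imP h.
Proof.
apply/polyP => i; rewrite coef_map_id0 // coefD !coefCM !coef_map_id0 //.
by rewrite ImM addrC.
Qed.

Lemma imPD h1 h2 : imP (h1 + h2) = imP h1 + imP h2.
Proof. by apply/polyP => i; rewrite coefD !coef_map_id0 // coefD ImD. Qed.

Lemma imPMX h : imP (h * 'X) = imP h * 'X.
Proof.
apply/polyP => i; rewrite coef_map_id0 // !coefMX.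
by case: i => [|i] //=; rewrite coef_map_id0.
Qed.

Lemma imPCM (c : R) h : imP (c%:C%:P * h) = c%:P * imP h.
Proof.
apply/polyP => i; rewrite coef_map_id0 // !coefCM coef_map_id0 //.
by rewrite ImM Im_real Re_real mul0r addr0.
Qed.

Lemma imP_realM (r : {poly R}) U :
  imP (map_poly (real_complex R) r * U) = r * imP U.
Proof.
elim/poly_ind: r => [|r c IH]; first by rewrite map_poly0 !mul0r /imP map_poly0.
rewrite rmorphD rmorphM /= map_polyX map_polyC /=.
rewrite mulrDl imPD mulrAC imPMX IH imPCM; ring.
Qed.

Lemma horner_imP (U : {poly C}) x : (imP U).[x] = Im U.[x%:C].
Proof.
elim/poly_ind: U => [|U c IH]; first by rewrite /imP map_poly0 !horner0.
have -> : imP (U * 'X + c%:P) = imP U * 'X + (Im c)%:P.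
  by rewrite imPD imPMX /imP map_polyC.
by rewrite !hornerMXaddC IH ImD ImM Im_real Re_real mulr0 add0r.
Qed.


Lemma Sf_fact (be x : R) k (A B : {poly R}) : (A.[x] != 0) || (B.[x] != 0) ->
  Sf be (T x ^+ k * A) (T x ^+ k * B) x =
  if (A.[x] != 0) && (B.[x] != 0) then 2^-1 * Num.sg (be * A.[x] * B.[x]) else 0.
Proof.
move=> hAB; rewrite /Sf.
have nz0 V : V.[x] != 0 -> T x ^+ k * V != 0.
  move=> hV; rewrite mulf_neq0 ?expf_neq0 ?polyXsubC_eq0 //.
  by apply: contraNneq hV => ->; rewrite horner0.
have rt V : V.[x] != 0 -> ~~ root V x by move=> hV; rewrite rootE.
have gt V : V != 0 -> V.[x] = 0 -> mult x (T x ^+ k * V) = (k + mup x V)%N /\ (0 < mup x V)%N.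
  by move=> V0 hV; split; [exact: mup_shift | apply: mup_pos; rewrite // rootE hV].
case: (boolP (A.[x] != 0)) => hA; case: (boolP (B.[x] != 0)) => hB /=.
- by rewrite !nz0 // !mult_fact ?(rt _ hA) ?(rt _ hB) // eqxx /qv !pcof_fact ?(rt _ hA) ?(rt _ hB).
- move: hB; rewrite negbK => /eqP hB.
  have [B0|B0] := eqVneq B 0; first by rewrite B0 mulr0 eqxx andbF.
  have [e1 e2] := gt B B0 hB.
  have kk : (k < k + mup x B)%N by rewrite -{1}(addn0 k) ltn_add2l.
  by rewrite e1 (mult_fact _ (rt _ hA)) (ltn_eqF kk) !andbF.
- move: hA; rewrite negbK => /eqP hA.
  have [A0|A0] := eqVneq A 0; first by rewrite A0 mulr0 eqxx.
  have [e1 e2] := gt A A0 hA.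
  have kk : (k < k + mup x A)%N by rewrite -{1}(addn0 k) ltn_add2l.
  have ne : ((k + mup x A)%N == k) = false by rewrite eq_sym (ltn_eqF kk).
  by rewrite e1 (mult_fact _ (rt _ hB)) ne !andbF.
- by move: hAB; rewrite (negbTE hA) (negbTE hB).
Qed.

Definition sig (g c : C) :=
  if (Im c != 0) && (Im (g * c) != 0) then 2^-1 * Num.sg (Im g * Im c * Im (g * c)) else 0.

Definition Sv (g : C) (h : {poly C}) (x : R) := Sf (Im g) (imP h) (imP (g%:P * h)) x.

Lemma Sv_fact (g : C) (h : {poly C}) x k U : Im g != 0 -> U.[x%:C] != 0 ->
  h = ('X - (x%:C)%:P) ^+ k * U -> Sv g h x = sig g U.[x%:C].
Proof.
move=> g0 U0 hh.
have eT : ('X - (x%:C)%:P) ^+ k = map_poly (real_complex R) (T x ^+ k).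
  by rewrite rmorphXn rmorphB /= map_polyX map_polyC.
have e1 : imP h = T x ^+ k * imP U by rewrite hh eT imP_realM.
have e2 : imP (g%:P * h) = T x ^+ k * imP (g%:P * U).
  by rewrite hh mulrCA eT imP_realM.
rewrite /Sv e1 e2 Sf_fact !horner_imP hornerM hornerC /sig //.
case: (eqVneq (Im U.[x%:C]) 0) => //= hI.
rewrite ImM hI mulr0 add0r mulf_neq0 //.
apply: contraNneq U0 => hR.
by move: hI hR; case: (U.[x%:C]) => a b /= -> ->.
Qed.

Lemma sig_scale (g : C) (e : R) c : e != 0 -> sig g (e%:C * c) = sig g c.
Proof.
move=> e0.
have h1 z : Im (e%:C * z) = e * Im z by rewrite ImM Im_real Re_real mul0r addr0.
rewrite /sig mulrCA !h1 !mulf_eq0 (negbTE e0) /=.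
case: ifP => // _.
have -> : Im g * (e * Im c) * (e * Im (g * c)) = e ^+ 2 * (Im g * Im c * Im (g * c)) by ring.
by rewrite sgrM gtr0_sg ?mul1r // exprn_even_gt0.
Qed.

Lemma edgeC (g : C) (h : {poly C}) a b : Im g != 0 -> a < b ->
  IndAB_lt a b (reP h) (imP h) - IndAB_lt a b (reP (g%:P * h)) (imP (g%:P * h))
  = Sv g h b - Sv g h a.
Proof.
move=> g0 ab; apply: edge => //; first exact: reP_scale.
exact: imP_scale.
Qed.

End Cx.


Lemma map_MXaddC (A B : nzRingType) (f : A -> B) (p : {poly A}) c :
  f 0 = 0 -> map_poly f (p * 'X + c%:P) = map_poly f p * 'X + (f c)%:P.
Proof.
move=> f0; apply/polyP => i.
rewrite coef_map_id0 // !coefD !coefMX !coefC.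
case: i => [|i] /=; first by rewrite !add0r.
by rewrite !addr0 coef_map_id0.
Qed.

Section Bi.
Variable R : rcfType.
Local Notation C := R[i].
Local Notation Re := (@complex.Re R).
Local Notation Im := (@complex.Im R).

Lemma RePD (h1 h2 : {poly C}) : reP (h1 + h2) = reP h1 + reP h2.
Proof. by apply/polyP => i; rewrite coefD !coef_map_id0 // coefD ReD. Qed.

Lemma RePMX (h : {poly C}) : reP (h * 'X) = reP h * 'X.
Proof.
apply/polyP => i; rewrite coef_map_id0 // !coefMX.
by case: i => [|i] //=; rewrite coef_map_id0.
Qed.

Lemma horner_reP (U : {poly C}) x : (reP U).[x] = Re U.[x%:C].
Proof.
elim/poly_ind: U => [|U c IH]; first by rewrite /reP map_poly0 !horner0.
have -> : reP (U * 'X + c%:P) = reP U * 'X + (Re c)%:P.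
  by rewrite RePD RePMX /reP map_polyC.
by rewrite !hornerMXaddC IH ReD ReM Im_real Re_real mulr0 subr0.
Qed.

Lemma RePMC (h : {poly C}) (y : R) : reP (h * (y%:C)%:P) = reP h * y%:P.
Proof.
by apply/polyP => i; rewrite coef_map_id0 // !coefMC coef_map_id0 // ReM Im_real Re_real mulr0 subr0.
Qed.

Lemma ImPMC (h : {poly C}) (y : R) : imP (h * (y%:C)%:P) = imP h * y%:P.
Proof.
by apply/polyP => i; rewrite coef_map_id0 // !coefMC coef_map_id0 // ImM Im_real Re_real mulr0 add0r mulrC.
Qed.

Definition hY (H : {poly {poly C}}) (y : R) : {poly C} := H.[(y%:C)%:P].
Definition hX (H : {poly {poly C}}) (x : R) : {poly C} := map_poly (fun p => p.[x%:C]) H.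

Lemma evalY_re (H : {poly {poly C}}) y : evalY (bre H) y = reP (hY H y).
Proof.
rewrite /evalY /hY; elim/poly_ind: H => [|H c IH].
  by rewrite /bre !horner0 /reP !map_poly0 horner0.
rewrite /bre map_MXaddC ?map_poly0 //.
rewrite !hornerMXaddC -/(bre H) IH RePD RePMC.
by rewrite /reP.
Qed.

Lemma evalY_im (H : {poly {poly C}}) y : evalY (bim H) y = imP (hY H y).
Proof.
rewrite /evalY /hY; elim/poly_ind: H => [|H c IH].
  by rewrite /bim !horner0 /imP !map_poly0 horner0.
rewrite /bim map_MXaddC ?map_poly0 //.
rewrite !hornerMXaddC -/(bim H) IH imPD ImPMC.
by rewrite /imP.
Qed.

Lemma evalX_re (H : {poly {poly C}}) x : evalX (bre H) x = reP (hX H x).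
Proof.
apply/polyP => i; rewrite /evalX /hX /bre.
rewrite coef_map_id0; last exact: horner0.
rewrite coef_map_id0 ?map_poly0 //.
rewrite /reP coef_map_id0 //.
rewrite coef_map_id0; last exact: horner0.
by rewrite -horner_reP.
Qed.

Lemma evalX_im (H : {poly {poly C}}) x : evalX (bim H) x = imP (hX H x).
Proof.
apply/polyP => i; rewrite /evalX /hX /bim.
rewrite coef_map_id0; last exact: horner0.
rewrite coef_map_id0 ?map_poly0 //.
rewrite /imP coef_map_id0 //.
rewrite coef_map_id0; last exact: horner0.
by rewrite -horner_imP.
Qed.

End Bi.


Lemma map_polyC0 (A B : nzSemiRingType) (f : A -> B) a : f 0 = 0 ->
  map_poly f a%:P = (f a)%:P.
Proof. by move=> f0; apply/polyP => i; rewrite coef_map_id0 // !coefC; case: i. Qed.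

Section OfZ.
Variable R : rcfType.
Local Notation C := R[i].
Local Notation Re := (@complex.Re R).
Local Notation Im := (@complex.Im R).

Lemma cext (a b : C) : Re a = Re b -> Im a = Im b -> a = b.
Proof. by case: a => a1 a2; case: b => b1 b2 /= -> ->. Qed.

Lemma conj_i : conjc ('i : C) = - 'i.
Proof. by apply: cext => /=; rewrite ?oppr0. Qed.

Lemma ofZ_morph (f : {rmorphism {poly {poly C}} -> {poly C}}) (F : {poly C}) :
  (forall a : C, f a%:P%:P = a%:P) -> f (ofZ F) = F \Po f (Zpoly R).
Proof.
move=> hf; rewrite /ofZ -horner_map -map_poly_comp /comp_poly.
by congr (_.[_]); apply: eq_map_poly => a /=; rewrite hf.
Qed.

Lemma bconj_ofZ (G : {poly C}) :
  bconj (ofZ G) = (map_poly (fun c : C => c%:P%:P) (map_poly conjc G)).[bconj (Zpoly R)].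
Proof.
rewrite /ofZ {1}/bconj -horner_map -!map_poly_comp /=; congr (_.[_]).
apply/polyP => i; rewrite !coef_map_id0 /= ?polyC0 ?map_poly0 ?rmorph0 //; last by apply: cext => //=; rewrite oppr0.
by rewrite !map_polyC0 ?map_poly0 // rmorph0.
Qed.

Lemma ofZc_morph (f : {rmorphism {poly {poly C}} -> {poly C}}) (G : {poly C}) :
  (forall a : C, f a%:P%:P = a%:P) ->
  f (bconj (ofZ G)) = map_poly conjc G \Po f (bconj (Zpoly R)).
Proof.
move=> hf; rewrite bconj_ofZ -horner_map -map_poly_comp /comp_poly.
by congr (_.[_]); apply: eq_map_poly => a /=; rewrite hf.
Qed.


Local Notation Hp F G := (ofZ F * bconj (ofZ G)).

Lemma EvY_Z (y : R) : horner_eval ((y%:C)%:P) (Zpoly R) = 'X + ('i * y%:C)%:P.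
Proof. by rewrite /horner_eval /Zpoly hornerD hornerC hornerCM hornerX polyCM. Qed.

Lemma EvY_Zc (y : R) : horner_eval ((y%:C)%:P) (bconj (Zpoly R)) = 'X + (- 'i * y%:C)%:P.
Proof.
rewrite /Zpoly /bconj rmorphD rmorphM /= map_polyX !map_polyC0 ?map_poly0 ?conjc0 //.
rewrite map_polyX conj_i.
by rewrite /horner_eval hornerD hornerC hornerCM hornerX polyCM.
Qed.

Lemma EvX_Z (x : R) : map_poly (horner_eval (x%:C)) (Zpoly R) = (x%:C)%:P + 'i%:P * 'X.
Proof.
rewrite /Zpoly rmorphD rmorphM /= map_polyX !map_polyC0 ?rmorph0 //.
by rewrite /horner_eval hornerX hornerC.
Qed.

Lemma EvX_Zc (x : R) : map_poly (horner_eval (x%:C)) (bconj (Zpoly R)) = (x%:C)%:P + (- 'i)%:P * 'X.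
Proof.
rewrite /Zpoly /bconj rmorphD rmorphM /= map_polyX !map_polyC0 ?map_poly0 ?conjc0 //.
rewrite map_polyX conj_i rmorphD rmorphM /= map_polyX !map_polyC0 ?rmorph0 //.
by rewrite /horner_eval hornerX hornerC.
Qed.

Lemma hY_eq F G (y : R) : hY (Hp F G) y =
  (F \Po ('X + ('i * y%:C)%:P)) * (map_poly conjc G \Po ('X + (- 'i * y%:C)%:P)).
Proof.
rewrite /hY -[_.[_]]/(horner_eval ((y%:C)%:P) _) rmorphM /=.
have hE : forall a : C, horner_eval ((y%:C)%:P) a%:P%:P = a%:P.
  by move=> a; rewrite /horner_eval /= hornerC.
rewrite (@ofZ_morph (horner_eval ((y%:C)%:P)) F hE).
rewrite (@ofZc_morph (horner_eval ((y%:C)%:P)) G hE).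
by rewrite -EvY_Z -EvY_Zc.
Qed.


Lemma hX_eq F G (x : R) : hX (Hp F G) x =
  (F \Po ((x%:C)%:P + 'i%:P * 'X)) * (map_poly conjc G \Po ((x%:C)%:P + (- 'i)%:P * 'X)).
Proof.
rewrite /hX -[map_poly _ _]/(map_poly (horner_eval (x%:C)) _) rmorphM /=.
have hE : forall a : C, map_poly (horner_eval (x%:C)) a%:P%:P = a%:P.
  by move=> a; rewrite map_polyC0 ?rmorph0 // /horner_eval /= hornerC.
rewrite (@ofZ_morph (map_poly (horner_eval (x%:C))) F hE).
rewrite (@ofZc_morph (map_poly (horner_eval (x%:C))) G hE).
by rewrite -EvX_Z -EvX_Zc.
Qed.

End OfZ.


Section Vertex.
Variable R : rcfType.
Local Notation C := R[i].
Local Notation Re := (@complex.Re R).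
Local Notation Im := (@complex.Im R).
Local Notation Hp F G := (ofZ F * bconj (ofZ G)).

Lemma ReJ (a : C) : Re (conjc a) = Re a. Proof. by case: a. Qed.
Lemma ImJ (a : C) : Im (conjc a) = - Im a. Proof. by case: a. Qed.

Lemma zE (x y : R) : Complex x y = x%:C + 'i * y%:C.
Proof. by apply: cext; rewrite ?ReD ?ImD ?ReM ?ImM /=; ring. Qed.

Lemma eps_real (m n : nat) : ~~ odd (m + n) ->
  exists2 e : R, 'i ^+ m * (- 'i) ^+ n = e%:C :> C & e != 0.
Proof.
move=> hp.
have hj : (m + n = 2 * (m + n)./2)%N.
  by rewrite mul2n -[LHS]odd_double_half (negbTE hp).
move: hj; set j := (m + n)./2 => hj.
exists ((-1) ^+ (n + j)); last by rewrite signr_eq0.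
rewrite [(- 'i) ^+ n]exprNn mulrCA -exprD hj exprM sqrCi -exprD.
by rewrite rmorphXn rmorphN1.
Qed.

Lemma vertex (F G : {poly C}) (g : C) (x y : R) : F != 0 -> G != 0 -> Im g != 0 ->
  ~~ odd (mup (Complex x y) F + mup (Complex x y) G) ->
  Sv g (hY (Hp F G) y) x = Sv g (hX (Hp F G) x) y.
Proof.
move=> F0 G0 g0; rewrite zE; set z := x%:C + 'i * y%:C.
have [Fz hF rF] := mup_factor z F0.
have [Gz hG rG] := mup_factor z G0.
move: (mup z F) (mup z G) hF hG => m n hF hG hpar.
set Gzc := map_poly conjc Gz.
have zc : conjc z = x%:C + (- 'i) * y%:C.
  by apply: cext; rewrite ?ReJ ?ImJ /z ?ReD ?ImD ?ReM ?ImM /=; ring.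
have hGc : map_poly conjc G = ('X - (conjc z)%:P) ^+ n * Gzc.
  by rewrite hG rmorphM rmorphXn rmorphB /= map_polyX map_polyC.
have rF' : Fz.[z] != 0 by rewrite -rootE.
have rGc : Gzc.[conjc z] != 0.
  by rewrite /Gzc horner_map conjc_eq0 -rootE.
set q1 := 'X + ('i * y%:C)%:P; set q2 := 'X + (- 'i * y%:C)%:P.
have e1 : ('X - z%:P) \Po q1 = 'X - (x%:C)%:P.
  by rewrite comp_polyB comp_polyX comp_polyC /q1 /z rmorphD /=; ring.
have e2 : ('X - (conjc z)%:P) \Po q2 = 'X - (x%:C)%:P.
  by rewrite comp_polyB comp_polyX comp_polyC /q2 zc rmorphD /=; ring.
have hh : hY (Hp F G) y = ('X - (x%:C)%:P) ^+ (m + n) * ((Fz \Po q1) * (Gzc \Po q2)).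
  rewrite hY_eq -/q1 -/q2 hF hGc !comp_polyM !rmorphXn /= e1 e2 exprD; ring.
have hU : ((Fz \Po q1) * (Gzc \Po q2)).[x%:C] = Fz.[z] * Gzc.[conjc z].
  by rewrite hornerM !horner_comp /q1 /q2 !hornerD !hornerX !hornerC zc.
set p1 := (x%:C)%:P + 'i%:P * 'X; set p2 := (x%:C)%:P + (- 'i)%:P * 'X.
have e3 : ('X - z%:P) \Po p1 = 'i%:P * ('X - (y%:C)%:P).
  by rewrite comp_polyB comp_polyX comp_polyC /p1 /z rmorphD rmorphM /=; ring.
have e4 : ('X - (conjc z)%:P) \Po p2 = (- 'i)%:P * ('X - (y%:C)%:P).
  by rewrite comp_polyB comp_polyX comp_polyC /p2 zc rmorphD rmorphM /=; ring.
have hv : hX (Hp F G) x = ('X - (y%:C)%:P) ^+ (m + n) *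
     (('i ^+ m * (- 'i) ^+ n)%:P * ((Fz \Po p1) * (Gzc \Po p2))).
  rewrite hX_eq -/p1 -/p2 hF hGc !comp_polyM !rmorphXn /= e3 e4 !exprMn exprD.
  rewrite rmorphM /= !rmorphXn /=; ring.
have hV : (('i ^+ m * (- 'i) ^+ n)%:P * ((Fz \Po p1) * (Gzc \Po p2))).[y%:C]
    = ('i ^+ m * (- 'i) ^+ n) * (Fz.[z] * Gzc.[conjc z]).
  by rewrite hornerCM hornerM !horner_comp /p1 /p2 !hornerD !hornerCM !hornerX !hornerC zc.
have [e he e0] := eps_real hpar.
have c0 : Fz.[z] * Gzc.[conjc z] != 0 by rewrite mulf_neq0.
rewrite (Sv_fact g0 _ hh) ?hU // (Sv_fact g0 _ hv) ?hV ?he ?sig_scale //.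
by rewrite mulf_neq0 // fmorph_eq0.
Qed.

End Vertex.


Section Final.
Variable R : rcfType.
Local Notation C := R[i].
Local Notation Re := (@complex.Re R).
Local Notation Im := (@complex.Im R).
Local Notation Hp F G := (ofZ F * bconj (ofZ G)).

Lemma ofZ_scale (c : C) (F : {poly C}) : ofZ (c%:P * F) = c%:P%:P * ofZ F.
Proof.
rewrite /ofZ.
have -> : map_poly (fun c0 : C => c0%:P%:P) (c%:P * F)
        = (c%:P%:P)%:P * map_poly (fun c0 : C => c0%:P%:P) F.
  apply/polyP => i; rewrite coefCM !coef_map_id0 // coefCM.
  by rewrite !polyCM.
by rewrite hornerCM.
Qed.

Lemma hY_scale (c : C) (H : {poly {poly C}}) y : hY (c%:P%:P * H) y = c%:P * hY H y.
Proof. by rewrite /hY hornerCM. Qed.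

Lemma hX_scale (c : C) (H : {poly {poly C}}) x : hX (c%:P%:P * H) x = c%:P * hX H x.
Proof.
rewrite /hX; change (map_poly (horner_eval x%:C) (c%:P%:P * H) = c%:P * map_poly (horner_eval x%:C) H).
rewrite rmorphM /= map_polyC0 ?rmorph0 //.
by rewrite /horner_eval /= hornerC.
Qed.

Lemma IndAB_pos a b (P Q : {poly R}) : a < b -> IndAB a b P Q = IndAB_lt a b P Q.
Proof. by move=> ab; rewrite /IndAB ab. Qed.

Lemma IndAB_neg a b (P Q : {poly R}) : a < b -> IndAB b a P Q = - IndAB_lt a b P Q.
Proof. by move=> ab; rewrite /IndAB lt_gtF // ab. Qed.

Lemma par_conv (z : C) (F G : {poly C}) : (2 %| valC z F G)%Z -> ~~ odd (mup z F + mup z G).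
Proof.
rewrite /valC dvdzE /= dvdn2 oddD.
case: (leqP (mup z F) (mup z G)) => h.
  by rewrite distnEr // oddB // addbC.
by rewrite distnEl ?(ltnW h) // oddB // ltnW.
Qed.

Lemma main_nonreal (F G : {poly C}) (g : C) (x0 x1 y0 y1 : R) :
  F != 0 -> G != 0 -> Im g != 0 -> x0 < x1 -> y0 < y1 ->
  (forall z : C, z \in [:: Complex x0 y0; Complex x1 y0;
                              Complex x1 y1; Complex x0 y1] ->
     (2 %| valC z F G)%Z) ->
  windQ (ofZ F) (ofZ G) x0 x1 y0 y1 = windQ (ofZ (g%:P * F)) (ofZ G) x0 x1 y0 y1.
Proof.
move=> F0 G0 g0 hx hy hpar.
have hv z : z \in [:: Complex x0 y0; Complex x1 y0; Complex x1 y1; Complex x0 y1] ->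
    ~~ odd (mup z F + mup z G) by move=> /hpar /par_conv.
have v00 := @vertex _ F G g x0 y0 F0 G0 g0 (hv (Complex x0 y0) (ltac:(by rewrite !inE eqxx ?orbT))).
have v10 := @vertex _ F G g x1 y0 F0 G0 g0 (hv (Complex x1 y0) (ltac:(by rewrite !inE eqxx ?orbT))).
have v11 := @vertex _ F G g x1 y1 F0 G0 g0 (hv (Complex x1 y1) (ltac:(by rewrite !inE eqxx ?orbT))).
have v01 := @vertex _ F G g x0 y1 F0 G0 g0 (hv (Complex x0 y1) (ltac:(by rewrite !inE eqxx ?orbT))).
rewrite /windQ ofZ_scale -mulrA.
set H := ofZ F * bconj (ofZ G).
rewrite /wind !evalY_re !evalY_im !evalX_re !evalX_im !hY_scale !hX_scale.
rewrite !(@IndAB_pos x0 x1 _ _ hx) !(@IndAB_pos y0 y1 _ _ hy) !(@IndAB_neg x0 x1 _ _ hx) !(@IndAB_neg y0 y1 _ _ hy).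
have E1 := edgeC (hY H y0) g0 hx.
have E2 := edgeC (hX H x1) g0 hy.
have E3 := edgeC (hY H y1) g0 hx.
have E4 := edgeC (hX H x0) g0 hy.
rewrite -/H in v00 v10 v11 v01.
lra.
Qed.

End Final.




End Helpers.
Import Helpers.

Unset Implicit Arguments. Set Strict Implicit.
Theorem lemma3p5 (R : rcfType) (F G : {poly R[i]}) (gamma : R[i])
    (x0 x1 y0 y1 : R) :
  F != 0 -> G != 0 -> gamma != 0 ->
  x0 < x1 -> y0 < y1 ->
  (forall z : R[i], z \in [:: Complex x0 y0; Complex x1 y0;
                              Complex x1 y1; Complex x0 y1] ->
     (2 %| valC z F G)%Z) ->
  windQ (ofZ F) (ofZ G) x0 x1 y0 y1 =
  windQ (ofZ (gamma%:P * F)) (ofZ G) x0 x1 y0 y1.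
Proof.
move=> F0 G0 g0 hx hy hpar.
case: (eqVneq (complex.Im gamma) 0) => hI; last exact: main_nonreal.
have iI : complex.Im ('i : R[i]) != 0 by rewrite oner_eq0.
have iF0 : 'i%:P * F != 0 by rewrite mulf_neq0 // polyC_eq0 neq0Ci.
have hR : complex.Re gamma != 0.
  apply/negP => /eqP hR; move/negP: g0; apply; apply/eqP.
  by move: hR hI; case: (gamma) => a b /= -> ->.
set g1 := gamma * - 'i.
have Ig1 : complex.Im g1 != 0.
  by rewrite /g1 ImM hI mul0r addr0 /= mulrN1 oppr_eq0.
have e : g1%:P * ('i%:P * F) = gamma%:P * F.
  by rewrite mulrA -polyCM /g1 -mulrA mulNr -expr2 sqrCi opprK mulr1.
have hpar' : forall z : R[i], z \in [:: Complex x0 y0; Complex x1 y0;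
                              Complex x1 y1; Complex x0 y1] ->
     (2 %| valC z ('i%:P * F) G)%Z.
  by move=> z hz; rewrite /valC mupCM ?neq0Ci //; apply: hpar.
rewrite (main_nonreal F0 G0 iI hx hy hpar).
by rewrite (main_nonreal iF0 G0 Ig1 hx hy hpar') e.
Qed.
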